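(* Let $n>1$, $q\geqslant 0$ and $m_0,\dots,m_{q-1}>1$ be natural numbers, and let $t,s_0,\dots,s_{q-1},u,v$ be variables distinct from $x$. Then the theory ${\sf TQ}$ proves that each of the formulas $\exists x\,[\Re_n(x\cdot t)\wedge \bigwedge_{j<q}\neg\Re_{m_j}(x\cdot s_j)]$, $\exists x\,[u<x\wedge \Re_n(x\cdot t)\wedge \bigwedge_{j<q}\neg\Re_{m_j}(x\cdot s_j)]$, $\exists x\,[x<v\wedge \Re_n(x\cdot t)\wedge \bigwedge_{j<q}\neg\Re_{m_j}(x\cdot s_j)]$ is equivalent to $\bigwedge_{j<q,\ m_j\mid n}\neg\Re_{m_j}(t^{-1}\cdot s_j)$, and that the formula $\exists x\,[u<x\wedge x<v\wedge \Re_n(x\cdot t)\wedge \bigwedge_{j<q}\neg\Re_{m_j}(x\cdot s_j)]$ is equivalent to $\bigwedge_{j<q,\ m_j\mid n}\neg\Re_{m_j}(t^{-1}\cdot s_j)\wedge u<v$. (Here $\bigwedge_{j<q,\,m_j\mid n}$ ranges over those $j<q$ with $m_j$ dividing $n$; an empty conjunction is the true formula.)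
   Context: Language $\{<,\times,\square^{-1},\mathbf{1}\}$; $y^n$ abbreviates $y\cdots y$ ($n$ times); for $n\geqslant 1$, $\Re_n(y)$ abbreviates the formula $\exists x\,(y=x^n)$. ${\sf TQ}$ is the theory axiomatized by: ($\texttt{O}_1$) $\forall x,y(x<y\rightarrow\neg(y<x))$; ($\texttt{O}_2$) $\forall x,y,z(x<y\wedge y<z\rightarrow x<z)$; ($\texttt{O}_3$) $\forall x,y(x<y\vee x=y\vee y<x)$; ($\texttt{M}_1$) $\forall x,y,z(x\cdot(y\cdot z)=(x\cdot y)\cdot z)$; ($\texttt{M}_2$) $\forall x(x\cdot\mathbf{1}=x)$; ($\texttt{M}_3$) $\forall x(x\cdot x^{-1}=\mathbf{1})$; ($\texttt{M}_4$) $\forall x,y(x\cdot y=y\cdot x)$; ($\texttt{M}_5$) $\forall x,y,z(x<y\rightarrow x\cdot z<y\cdot z)$; ($\texttt{M}_6$) $\exists y(y\neq\mathbf{1})$; ($\texttt{M}_{10}$) for each $n\geqslant1$: $\forall x,z\exists y(x<z\rightarrow x<y^n\wedge y^n<z)$; ($\texttt{M}_{11}$) for each $n\geqslant 1$, each $q\geqslant1$ and all natural numbers $m_0,\dots,m_{q-1}>1$: $\forall x_0,\dots,x_{q-1}\exists y\forall z\bigwedge_{j<q,\ m_j\nmid n}(y^n\cdot x_j\neq z^{m_j})$, the conjunction ranging over those $j<q$ for which $m_j$ does not divide $n$. *)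

(* Defs.v *)
From Stdlib Require Import Arith.

(* y^n abbreviates y*...*y (n times); for n = 0 we put 1 (never used: n >= 1). *)
Fixpoint pw {T : Type} (mul : T -> T -> T) (one : T) (y : T) (n : nat) : T :=
  match n with
  | 0 => one
  | 1 => y
  | S n' => mul y (pw mul one y n')
  end.

Record TQModel := {
  car :> Type;
  lt : car -> car -> Prop;
  mul : car -> car -> car;
  inv : car -> car;
  one : car;
  O1 : forall x y, lt x y -> ~ lt y x;
  O2 : forall x y z, lt x y -> lt y z -> lt x z;
  O3 : forall x y, lt x y \/ x = y \/ lt y x;
  M1 : forall x y z, mul x (mul y z) = mul (mul x y) z;
  M2 : forall x, mul x one = x;
  M3 : forall x, mul x (inv x) = one;
  M4 : forall x y, mul x y = mul y x;
  M5 : forall x y z, lt x y -> lt (mul x z) (mul y z);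
  M6 : exists y, y <> one;
  M10 : forall n, 1 <= n -> forall x z, exists y,
          lt x z -> lt x (pw mul one y n) /\ lt (pw mul one y n) z;
  M11 : forall n q (m : nat -> nat), 1 <= n -> 1 <= q ->
          (forall j, j < q -> 1 < m j) ->
          forall xs : nat -> car, exists y, forall z,
            forall j, j < q -> ~ Nat.divide (m j) n ->
              mul (pw mul one y n) (xs j) <> pw mul one z (m j)
}.

Definition tpow (M : TQModel) (y : M) (n : nat) : M := pw (mul M) (one M) y n.

Definition Re (M : TQModel) (n : nat) (y : M) : Prop := exists x : M, y = tpow M x n.

Definition RHS (M : TQModel) (n q : nat) (m : nat -> nat) (t : M) (s : nat -> M) : Prop :=
  forall j, j < q -> Nat.divide (m j) n -> ~ Re M (m j) (mul M (inv M t) (s j)).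

Definition Body (M : TQModel) (n q : nat) (m : nat -> nat) (t : M) (s : nat -> M) (x : M) : Prop :=
  Re M n (mul M x t) /\ (forall j, j < q -> ~ Re M (m j) (mul M x (s j))).

(* Main.v *)
Require Import Defs.
From Stdlib Require Import Arith Lia.

Section G.
Variable M : TQModel.
Local Notation "a * b" := (mul M a b).
Local Notation T := (tpow M).

Lemma invl (a : M) : inv M a * a = one M.
Proof. rewrite M4; apply M3. Qed.
Lemma onel (a : M) : one M * a = a.
Proof. rewrite M4; apply M2. Qed.
Lemma swap4 (a b c d : M) : (a*b)*(c*d) = (a*c)*(b*d).
Proof.
  rewrite <- !M1. f_equal. rewrite !M1. f_equal. apply M4.
Qed.
Lemma pw_S (y : M) k : T y (S k) = y * T y k.
Proof. unfold tpow. destruct k; simpl; [symmetry; apply M2 | reflexivity]. Qed.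
Lemma pw_add (y : M) a b : T y (a+b) = T y a * T y b.
Proof.
  induction a; simpl plus.
  - unfold tpow at 2; simpl. rewrite onel; reflexivity.
  - rewrite !pw_S, IHa, M1; reflexivity.
Qed.
Lemma pw_mul (y : M) a b : T y (a*b)%nat = T (T y a) b.
Proof.
  induction b.
  - rewrite Nat.mul_0_r; reflexivity.
  - rewrite pw_S, <- IHb. replace (a * S b)%nat with (a + a*b)%nat by lia.
    apply pw_add.
Qed.
Lemma pw_base (x y : M) k : T (x*y) k = T x k * T y k.
Proof.
  induction k.
  - unfold tpow; simpl; symmetry; apply M2.
  - rewrite !pw_S, IHk, swap4; reflexivity.
Qed.
Lemma pw_one k : T (one M) k = one M.
Proof. induction k; [reflexivity| rewrite pw_S, IHk; apply M2]. Qed.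
Lemma inv_uniq (a b : M) : a * b = one M -> b = inv M a.
Proof.
  intro H. rewrite <- (M2 M b), <- (M3 M a), M1, (M4 M b a), H. apply onel.
Qed.
Lemma Re_mul k (a b : M) : Re M k a -> Re M k b -> Re M k (a*b).
Proof. intros [x ->] [y ->]. exists (x*y). symmetry; apply pw_base. Qed.
Lemma Re_inv k (a : M) : Re M k a -> Re M k (inv M a).
Proof.
  intros [x ->]. exists (inv M x). symmetry; apply inv_uniq. rewrite <- pw_base, M3. apply pw_one.
Qed.
Lemma Re_cancel k (a b : M) : Re M k (a*b) -> Re M k a -> Re M k b.
Proof.
  intros Hab Ha. replace b with (inv M a * (a*b)).
  - apply Re_mul; [apply Re_inv|]; assumption.
  - rewrite M1, invl; apply onel.
Qed.
Lemma Re_pow k c (y : M) : Re M k (T y (c*k)).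
Proof. exists (T y c). apply pw_mul. Qed.
Lemma Re_div k n (a : M) : Nat.divide k n -> Re M n a -> Re M k a.
Proof.
  intros [c ->] [x ->]. rewrite pw_mul. exists (T x c). reflexivity.
Qed.
Lemma Re_ext k (a b : M) : a = b -> Re M k a -> Re M k b.
Proof. intros ->; auto. Qed.

Lemma big_elt : exists g : M, lt M (one M) g.
Proof.
  destruct (M6 M) as [y Hy]. destruct (O3 M y (one M)) as [H|[H|H]].
  - exists (inv M y). apply (M5 M _ _ (inv M y)) in H. rewrite M3, onel in H. exact H.
  - contradiction.
  - eauto.
Qed.
Lemma lt_mul_l (a b c : M) : lt M a b -> lt M (c*a) (c*b).
Proof. intro H. rewrite (M4 M c a), (M4 M c b). apply M5; exact H. Qed.
End G.

Fixpoint prodm (m : nat -> nat) (q : nat) : nat :=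
  match q with 0 => 1 | S q' => m q' * prodm m q' end.

Lemma prodm_div m q j : j < q -> Nat.divide (m j) (prodm m q).
Proof.
  induction q; intro H; [lia|]. simpl.
  destruct (Nat.eq_dec j q) as [->|Hne].
  - exists (prodm m q). lia.
  - destruct IHq as [c Hc]; [lia|]. exists (m q * c). rewrite Hc. lia.
Qed.
Lemma prodm_pos m q : (forall j, j < q -> 1 < m j) -> 0 < prodm m q.
Proof.
  induction q; intro H; simpl; [lia|].
  assert (1 < m q) by (apply H; lia). assert (0 < prodm m q) by (apply IHq; intros; apply H; lia).
  nia.
Qed.

Lemma forward (M : TQModel) n q m t s x :
  RHS M n q m t s \/ True -> Body M n q m t s x -> RHS M n q m t s.
Proof.
  intros _ [Hn Hs] j Hj Hd Hr. apply (Hs j Hj).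
  apply (Re_ext M _ (mul M (mul M x t) (mul M (inv M t) (s j)))).
  - rewrite <- M1, (M1 M t), M3, onel. reflexivity.
  - apply Re_mul; [|assumption]. apply (Re_div M _ n); assumption.
Qed.

Lemma core (M : TQModel) n q m t s u v :
  1 < n -> (forall j, j < q -> 1 < m j) -> RHS M n q m t s -> lt M u v ->
  exists x, lt M u x /\ lt M x v /\ Body M n q m t s x.
Proof.
  intros Hn Hm HR Huv.
  set (m' := fun j => if j <? q then m j else 2).
  destruct (M11 M n (S q) m' ltac:(lia) ltac:(lia)
             ltac:(intros j Hj; unfold m'; destruct (Nat.ltb_spec j q); auto)
             (fun j => mul M (inv M t) (s j))) as [y1 Hy1].
  set (Y := tpow M y1 n).
  set (c := mul M Y (inv M t)).
  set (P := prodm m q).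
  assert (HP : 0 < P) by (apply prodm_pos; auto).
  destruct (M10 M (P*n) ltac:(nia) (mul M u (inv M c)) (mul M v (inv M c))) as [w Hw].
  destruct Hw as [Hw1 Hw2]. { apply M5; exact Huv. }
  set (W := pw (mul M) (one M) w (P*n)).
  fold W in Hw1, Hw2.
  exists (mul M W c).
  assert (E : forall a : M, mul M (mul M a (inv M c)) c = a).
  { intro a. rewrite <- M1, invl, M2. reflexivity. }
  split; [|split].
  - rewrite <- (E u). apply M5; exact Hw1.
  - rewrite <- (E v). apply M5; exact Hw2.
  - split.
    + apply (Re_ext M _ (mul M W Y)).
      * unfold c. rewrite <- !M1, invl, M2. reflexivity.
      * apply Re_mul. 
        -- unfold W. change (Re M n (tpow M w (P*n))). apply Re_pow.
        -- exists y1. reflexivity.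
    + intros j Hj Hr.
      assert (HW : Re M (m j) W).
      { destruct (prodm_div m q j Hj) as [r Hr'].
        unfold W. change (Re M (m j) (tpow M w (P*n))).
        replace (P*n) with ((r*n) * m j) by (unfold P; rewrite Hr'; lia). apply Re_pow. }
      assert (H2 : Re M (m j) (mul M Y (mul M (inv M t) (s j)))).
      { apply (Re_cancel M _ W); [|exact HW].
        apply (Re_ext M _ (mul M (mul M W c) (s j))); [|exact Hr].
        unfold c. rewrite <- !M1. reflexivity. }
      assert (Hdd : {Nat.divide (m j) n} + {~ Nat.divide (m j) n}).
      { assert (m j <> 0) by (specialize (Hm j Hj); lia).
        destruct (Nat.eq_dec (n mod m j) 0) as [e|e]; [left|right];
          rewrite <- Nat.Lcm0.mod_divide; auto. }
      destruct Hdd as [Hd|Hd].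
      * apply (HR j Hj Hd). apply (Re_cancel M _ Y); [exact H2|].
        apply (Re_div M _ n); [exact Hd|]. exists y1; reflexivity.
      * destruct H2 as [z Hz]. apply (Hy1 z j ltac:(lia)).
        -- unfold m'. destruct (Nat.ltb_spec j q); [exact Hd|lia].
        -- unfold m'. destruct (Nat.ltb_spec j q); [|lia]. exact Hz.
Qed.

Theorem lemma5 :
  forall (M : TQModel) (n q : nat) (m : nat -> nat),
    1 < n -> (forall j, j < q -> 1 < m j) ->
    forall (t : M) (s : nat -> M) (u v : M),
      ((exists x : M, Body M n q m t s x) <-> RHS M n q m t s) /\
      ((exists x : M, lt M u x /\ Body M n q m t s x) <-> RHS M n q m t s) /\
      ((exists x : M, lt M x v /\ Body M n q m t s x) <-> RHS M n q m t s) /\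
      ((exists x : M, lt M u x /\ lt M x v /\ Body M n q m t s x) <->
         (RHS M n q m t s /\ lt M u v)).
Proof.
  intros M n q m Hn Hm t s u v.
  destruct (big_elt M) as [g Hg].
  assert (Hup : forall a : M, lt M a (mul M a g)).
  { intro a. rewrite <- (M2 M a) at 1. apply lt_mul_l; exact Hg. }
  assert (Hdn : forall a : M, lt M (mul M a (inv M g)) a).
  { intro a. pose proof (Hup (mul M a (inv M g))) as H. rewrite <- M1, invl, M2 in H. exact H. }
  split; [|split; [|split]]; split.
  - intros [x Hx]. eapply forward; eauto.
  - intro HR. destruct (core M n q m t s u (mul M u g) Hn Hm HR (Hup u)) as [x Hx]. exists x; tauto.
  - intros [x Hx]. eapply forward; [|apply Hx]. auto.
  - intro HR. destruct (core M n q m t s u (mul M u g) Hn Hm HR (Hup u)) as [x Hx]. exists x; tauto.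
  - intros [x Hx]. eapply forward; [|apply Hx]. auto.
  - intro HR. destruct (core M n q m t s (mul M v (inv M g)) v Hn Hm HR (Hdn v)) as [x Hx]. exists x; tauto.
  - intros [x [H1 [H2 H3]]]. split; [eapply forward; eauto | eapply O2; eauto].
  - intros [HR Huv]. apply core; auto.
Qed.
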